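(* Let $F\ge1$, $N_{\max}\ge1$, and let $\mathcal{L}$ be the collection of local environments with at most $N_{\max}$ elements. For $o\in\mathrm{O}(3)$ and $\mathrm{LE}\in\mathcal{L}$ put $o(\mathrm{LE})=\{(s,xo^T):(s,x)\in\mathrm{LE}\}$; call $g:\mathcal{L}\to\mathbb{R}^{3\times3}$ $\mathrm{O}(3)$-equivariant if $g(o(\mathrm{LE}))=g(\mathrm{LE})o^T$ for all $o\in\mathrm{O}(3)$ and $\mathrm{LE}\in\mathcal{L}$. Then: (a) there exists an $\mathrm{O}(3)$-equivariant $g:\mathcal{L}\to\mathbb{R}^{3\times 3}$ such that, for every $\mathrm{LE}\in\mathcal{L}$, $g(\mathrm{LE})$ has full rank if and only if there is no $o\in\mathrm{O}(3)$ with $o\neq I$ and $o(\mathrm{LE})=\mathrm{LE}$; (b) for every $\mathrm{O}(3)$-equivariant $g:\mathcal{L}\to\mathbb{R}^{3\times 3}$ and every $\mathrm{LE}\in\mathcal{L}$, if $g(\mathrm{LE})$ has full rank then there is no $o\in\mathrm{O}(3)$, $o\ne I$, with $o(\mathrm{LE})=\mathrm{LE}$.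
   Context: A local environment is a finite set $\mathrm{LE}=\{(s_j,x_j)\}$ of pairs with $s_j\in\mathbb{R}^F$ (scalar atom features) and $x_j\in\mathbb{R}^{1\times 3}$ (relative positions of neighbours of a center atom). $\mathrm{O}(3)=\{Q\in\mathbb{R}^{3\times3}: QQ^T=I\}$ and $I$ is the $3\times3$ identity matrix. *)

(* Defs.v *)
From HB Require Import structures.
From mathcomp Require Import all_boot all_order all_algebra.
From mathcomp Require Import finmap.
From mathcomp Require Import reals.
Set Implicit Arguments. Unset Strict Implicit. Unset Printing Implicit Defensive.
Import Order.TTheory GRing.Theory Num.Theory.
Local Open Scope ring_scope.
Local Open Scope fset_scope.

(* An atom of a local environment: scalar features s in R^F and relative
   position x in R^{1x3}. *)
Definition atom (R : realType) (F : nat) := ('rV[R]_F * 'rV[R]_3)%type.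

Definition LEnv (R : realType) (F : nat) := {fset atom R F}.

Definition inL (R : realType) (F Nmax : nat) (LE : LEnv R F) : Prop :=
  (#|` LE| <= Nmax)%N.

Definition O3 (R : realType) (o : 'M[R]_3) : Prop := o *m o^T = 1%:M.

Definition actLE (R : realType) (F : nat) (o : 'M[R]_3) (LE : LEnv R F)
  : LEnv R F :=
  [fset ((p.1, p.2 *m o^T) : atom R F) | p in LE].

(* g : L -> R^{3x3} is O(3)-equivariant (g is only constrained on L). *)
Definition equivariant (R : realType) (F Nmax : nat)
  (g : LEnv R F -> 'M[R]_3) : Prop :=
  forall (o : 'M[R]_3) (LE : LEnv R F),
    O3 o -> inL Nmax LE -> g (actLE o LE) = g LE *m o^T.

Definition has_nontriv_sym (R : realType) (F : nat) (LE : LEnv R F) : Prop :=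
  exists o : 'M[R]_3, O3 o /\ o <> 1%:M /\ actLE o LE = LE.

Definition full_rank (R : realType) (M : 'M[R]_3) : Prop := \rank M = 3%N.

(* Main.v *)
Require Import Defs.
From HB Require Import structures.
From mathcomp Require Import all_boot all_order all_algebra.
From mathcomp Require Import finmap.
From mathcomp Require Import reals.
From mathcomp Require boolp classical_sets.
Local Open Scope ring_scope.
Import GRing.Theory.
Set Implicit Arguments. Unset Strict Implicit.

Section Aux.
Variables (R : realType) (F : nat).

Lemma actLE_comp (a b : 'M[R]_3) (LE : LEnv R F) :
  actLE a (actLE b LE) = actLE (a *m b) LE.
Proof.
apply/fsetP => x; apply/imfsetP/imfsetP => /=.
- move=> [y /imfsetP [z /= zin ->] ->] /=.
  by exists z => //; rewrite trmx_mul mulmxA.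
- move=> [z zin ->]; exists ((z.1, z.2 *m b^T) : atom R F).
    by apply/imfsetP; exists z.
  by rewrite /= trmx_mul mulmxA.
Qed.

Lemma actLE1 (LE : LEnv R F) : actLE 1%:M LE = LE.
Proof.
apply/fsetP => x; apply/imfsetP/idP => /=.
- by move=> [z zin ->]; rewrite trmx1 mulmx1 -surjective_pairing.
- by move=> xin; exists x => //; rewrite trmx1 mulmx1 -surjective_pairing.
Qed.

Lemma O3T (o : 'M[R]_3) : O3 o -> o^T *m o = 1%:M.
Proof. by move/mulmx1C. Qed.

Lemma O3tr (o : 'M[R]_3) : O3 o -> O3 o^T.
Proof. by move=> h; rewrite /O3 trmxK; apply: O3T. Qed.

Lemma O3M (a b : 'M[R]_3) : O3 a -> O3 b -> O3 (a *m b).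
Proof.
move=> ha hb; rewrite /O3 trmx_mul mulmxA -(mulmxA a) hb mulmx1 //.
Qed.

Lemma O31 : O3 (1%:M : 'M[R]_3).
Proof. by rewrite /O3 trmx1 mulmx1. Qed.

Lemma sym_act (q : 'M[R]_3) (LE : LEnv R F) :
  O3 q -> has_nontriv_sym LE -> has_nontriv_sym (actLE q LE).
Proof.
move=> hq [o [ho [on1 hs]]].
exists (q *m o *m q^T); split; first by apply: O3M; [apply: O3M|apply: O3tr].
split.
- move=> e; apply: on1.
  have : q^T *m (q *m o *m q^T) *m q = q^T *m 1%:M *m q by rewrite e.
  by rewrite !mulmxA (O3T hq) mul1mx -mulmxA (O3T hq) mulmx1 mulmx1 (O3T hq).
- by rewrite actLE_comp -(mulmxA _ q^T) (O3T hq) mulmx1 -actLE_comp hs.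
Qed.

Lemma sym_act_iff (q : 'M[R]_3) (LE : LEnv R F) :
  O3 q -> has_nontriv_sym (actLE q LE) <-> has_nontriv_sym LE.
Proof.
move=> hq; split; last exact: sym_act.
move=> h; have := sym_act (O3tr hq) h.
by rewrite actLE_comp (O3T hq) actLE1.
Qed.

Definition orbit (LE : LEnv R F) : LEnv R F -> Prop :=
  fun L' => exists o, O3 o /\ L' = actLE o LE.

Lemma orbit_act (q : 'M[R]_3) (LE : LEnv R F) :
  O3 q -> orbit (actLE q LE) = orbit LE.
Proof.
move=> hq; apply: boolp.funext => L'; apply: boolp.propext; split.
- move=> [o [ho ->]]; exists (o *m q); split; first exact: O3M.
  by rewrite actLE_comp.
- move=> [o [ho ->]]; exists (o *m q^T); split.
    by apply: O3M => //; apply: O3tr.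
  by rewrite actLE_comp -mulmxA (O3T hq) mulmx1.
Qed.

Definition rep (LE : LEnv R F) : LEnv R F := classical_sets.xget fset0 (orbit LE).

Lemma rep_orbit (LE : LEnv R F) : orbit LE (rep LE).
Proof.
apply: (@classical_sets.xgetI _ fset0 (orbit LE) LE).
by exists 1%:M; split; [exact: O31| rewrite actLE1].
Qed.

Definition gfun (LE : LEnv R F) : 'M[R]_3 :=
  if boolp.pselect (has_nontriv_sym LE) then 0
  else (classical_sets.xget 0 (fun o => O3 o /\ LE = actLE o (rep LE)))^T.

Lemma gspec (LE : LEnv R F) :
  let o := classical_sets.xget 0 (fun o => O3 o /\ LE = actLE o (rep LE)) in
  O3 o /\ LE = actLE o (rep LE).
Proof.
move=> o; have [p [hp e]] := rep_orbit LE.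
apply: (@classical_sets.xgetI _ 0 (fun o => O3 o /\ LE = actLE o (rep LE)) p^T); split; first exact: O3tr.
by rewrite e actLE_comp (O3T hp) actLE1.
Qed.

Lemma uniq_o (a b : 'M[R]_3) (r L' : LEnv R F) :
  ~ has_nontriv_sym L' -> O3 a -> O3 b -> L' = actLE a r -> L' = actLE b r -> a = b.
Proof.
move=> hn ha hb ea eb.
have st : a *m b^T = 1%:M.
  case: (boolp.pselect (a *m b^T = 1%:M)) => // ne; exfalso; apply: hn; exists (a *m b^T); split.
    by apply: O3M => //; apply: O3tr.
  split=> //; rewrite {1}eb actLE_comp -mulmxA (O3T hb) mulmx1 -ea //.
by rewrite -(mulmx1 a) -(O3T hb) mulmxA st mul1mx.
Qed.

End Aux.

Theorem theorem1 (R : realType) (F Nmax : nat) :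
  (1 <= F)%N -> (1 <= Nmax)%N ->
  (exists g : LEnv R F -> 'M[R]_3,
      equivariant Nmax g /\
      forall LE : LEnv R F, inL Nmax LE ->
        (full_rank (g LE) <-> ~ has_nontriv_sym LE))
  /\
  (forall g : LEnv R F -> 'M[R]_3, equivariant Nmax g ->
     forall LE : LEnv R F, inL Nmax LE ->
       full_rank (g LE) -> ~ has_nontriv_sym LE).
Proof.
move=> _ _; split.
- exists (@gfun R F); split.
  + move=> q LE hq _; rewrite /gfun.
    case: boolp.pselect => h1; case: boolp.pselect => h2.
    * by rewrite mul0mx.
    * by exfalso; apply: h2; apply/(sym_act_iff _ hq).
    * by exfalso; apply: h1; apply: sym_act.
    * have [ho eo] := gspec LE.
      have [ho' eo'] := gspec (actLE q LE).
      move: ho' eo'; set o' := classical_sets.xget _ _ => ho' eo'.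
      move: ho eo; set o := classical_sets.xget _ _ => ho eo.
      have er : rep (actLE q LE) = rep LE by rewrite /rep orbit_act.
      rewrite er in eo'.
      have -> : o' = q *m o.
        apply: (uniq_o h1 ho' (O3M hq ho) eo').
        by rewrite -actLE_comp -eo.
      by rewrite trmx_mul.
  + move=> LE _; rewrite /gfun /full_rank.
    case: boolp.pselect => h.
    * by rewrite mxrank0; split => // ?; exfalso.
    * split=> // _; have [ho _] := gspec LE.
      move: ho; set o := classical_sets.xget _ _ => ho.
      apply/eqP; change (row_free o^T); rewrite row_free_unit.
      by case: (mulmx1_unit (O3T ho)).
- move=> g hg LE hL hf [o [ho [on1 hs]]].
  have e := hg o LE ho hL; rewrite hs in e.
  have u : g LE \in unitmx by rewrite -row_free_unit /row_free hf.
  apply: on1.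
  have : invmx (g LE) *m g LE = invmx (g LE) *m (g LE *m o^T) by rewrite -e.
  rewrite mulmxA mulVmx // mul1mx => /(congr1 trmx).
  by rewrite trmxK trmx1 => ->.
Qed.
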